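(* Let $\rho_1$ be a path in a higraph and $k\ge1$. Given a $k$-tuple $(e^1_1,\dots,e^k_1)$ of distinct breaks of $\rho_1$, define recursively for $j=2,\dots,k$: $\rho_j=q(\rho_{j-1},e^{j-1}_{j-1})$ and $e^i_j=\pi(e^i_{j-1})$ for $j\le i\le k$, where $\pi$ is the bijection induced by the gluing $\rho_{j-1}\mapsto\rho_j$. Then the map $(e^1_1,e^2_1,\dots,e^k_1)\mapsto(e^1_1,e^2_2,\dots,e^k_k)$ is a bijection from the set of $k$-tuples of distinct breaks of $\rho_1$ to the set of $k$-step gluing sequences on $\rho_1$. Furthermore, if two $k$-tuples differ by a permutation, then the corresponding $k$-step gluing sequences terminate in the same path $\rho_{k+1}$.
   Context: A directed hypergraph $\mathcal H=(\mathcal V,\mathcal E)$ has edges $\varepsilon=(I,J)\in2^{\mathcal V}\times2^{\mathcal V}$, source $I$, target $J$. It is a higraph if for all edges $\varepsilon,\varepsilon'$: (Transitive) if $t(\varepsilon)\cap s(\varepsilon')\ne\emptyset$ then it equals $\{K\}$ for one vertex $K$, the unions $s(\varepsilon)\cup(s(\varepsilon')\setminus\{K\})$ and $(t(\varepsilon)\setminus\{K\})\cup t(\varepsilon')$ are disjoint unions and their pair is an edge; (Acyclic) if $t(\varepsilon)\cap s(\varepsilon')$ and $t(\varepsilon')\cap s(\varepsilon)$ are both non-empty then $\varepsilon=\varepsilon'=(\{K\},\{K\})$. A path is a non-empty finite directed tree $T=(V,E)$ (nodes; arrows, called breaks) with $\rho:V\to\mathcal E$ such that for each arrow $e$, $t(\rho(s(e)))\cap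 s(\rho(t(e)))$ is a single vertex $\rho(e)$, and distinct arrows with common source node or common target node have distinct $\rho(e)$; label-compatible tree isomorphisms identify paths. For a subpath $\rho'$, $s(\rho')=\bigcup_v(s(\rho'(v))\setminus\{\rho'(e):t(e)=v\})$, $t(\rho')=\bigcup_v(t(\rho'(v))\setminus\{\rho'(e):s(e)=v\})$. Gluing at a break $e$: $q(\rho,e)$ has tree obtained by contracting the arrow $e$ to a node $v^*$ (other arrows kept), labels unchanged away from $v^*$, $\rho(v^* )=(s(\rho'),t(\rho'))$ with $\rho'$ the subpath on the endpoints of $e$. This contraction induces a bijection $\pi$ from the arrows of the old tree other than $e$ to the arrows of the new tree. A $k$-step gluing sequence on $\rho_1$ is $(e_1,\dots,e_k)$ with $e_i$ a break of $\rho_i$ and $\rho_{i+1}=q(\rho_i,e_i)$, identified up to isomorphisms of the corresponding paths identifying corresponding breaks. *)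

(* Defs.v *)
From mathcomp Require Import ssreflect ssrfun ssrbool eqtype ssrnat seq.
From mathcomp Require Import boolp classical_sets.
From Stdlib Require Import Relations.

Set Implicit Arguments.
Unset Strict Implicit.
Unset Printing Implicit Defensive.

Local Open Scope classical_set_scope.

Definition edge (V : Type) := (set V * set V)%type.
Definition esrc V (eps : edge V) : set V := eps.1.
Definition etgt V (eps : edge V) : set V := eps.2.

Definition higraph_transitive V (H : set (edge V)) : Prop :=
  forall eps eps', H eps -> H eps' ->
    etgt eps `&` esrc eps' !=set0 ->
    exists K : V,
      etgt eps `&` esrc eps' = [set K] /\
      esrc eps `&` (esrc eps' `\ K) = set0 /\
      (etgt eps `\ K) `&` etgt eps' = set0 /\
      H (esrc eps `|` (esrc eps' `\ K), (etgt eps `\ K) `|` etgt eps').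

Definition higraph_acyclic V (H : set (edge V)) : Prop :=
  forall eps eps', H eps -> H eps' ->
    etgt eps `&` esrc eps' !=set0 -> etgt eps' `&` esrc eps !=set0 ->
    exists K : V, eps = ([set K], [set K]) /\ eps' = ([set K], [set K]).

Definition is_higraph V (H : set (edge V)) : Prop :=
  higraph_transitive H /\ higraph_acyclic H.

(* Nodes are 0..nn-1, arrows (breaks) are 0..na-1; arrow [a] goes from node
   [asrc a] to node [atgt a]; [nlab] is rho on nodes, [alab] is rho on arrows.
   Values outside the index ranges are irrelevant. *)
Record rpath (V : Type) := RPath {
  nn : nat;
  na : nat;
  nlab : nat -> edge V;
  asrc : nat -> nat;
  atgt : nat -> nat;
  alab : nat -> V }.

Definition uadj V (p : rpath V) (x y : nat) : Prop :=
  exists a, a < na p /\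
    ((asrc p a = x /\ atgt p a = y) \/ (asrc p a = y /\ atgt p a = x)).

Definition is_tree V (p : rpath V) : Prop :=
  [/\ 0 < nn p, (na p).+1 = nn p,
      (forall a, a < na p -> asrc p a < nn p /\ atgt p a < nn p) &
      (forall x y, x < nn p -> y < nn p -> clos_refl_trans nat (uadj p) x y)].

Definition is_path V (H : set (edge V)) (p : rpath V) : Prop :=
  [/\ is_tree p,
      (forall v, v < nn p -> H (nlab p v)),
      (forall a, a < na p ->
         etgt (nlab p (asrc p a)) `&` esrc (nlab p (atgt p a)) = [set alab p a]),
      (forall a b, a < na p -> b < na p -> a <> b ->
         asrc p a = asrc p b -> alab p a <> alab p b) &
      (forall a b, a < na p -> b < na p -> a <> b ->
         atgt p a = atgt p b -> alab p a <> alab p b)].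

Definition path_iso V (p p' : rpath V) (phi psi : nat -> nat) : Prop :=
  [/\ (forall v, v < nn p -> phi v < nn p'),
      (forall v w, v < nn p -> w < nn p -> phi v = phi w -> v = w) &
      (forall v', v' < nn p' -> exists2 v, v < nn p & phi v = v')] /\
  [/\ (forall a, a < na p -> psi a < na p'),
      (forall a b, a < na p -> b < na p -> psi a = psi b -> a = b) &
      (forall a', a' < na p' -> exists2 a, a < na p & psi a = a')] /\
  (forall v, v < nn p -> nlab p' (phi v) = nlab p v) /\
  (forall a, a < na p -> [/\ asrc p' (psi a) = phi (asrc p a),
                             atgt p' (psi a) = phi (atgt p a) &
                             alab p' (psi a) = alab p a]).

Definition isomorphic V (p p' : rpath V) : Prop :=
  exists phi psi, path_iso p p' phi psi.

Definition sub_arrow V (p : rpath V) (S : nat -> Prop) (a : nat) : Prop :=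
  a < na p /\ S (asrc p a) /\ S (atgt p a).

Definition subpath_src V (p : rpath V) (S : nat -> Prop) : set V :=
  [set x | exists v, [/\ S v, esrc (nlab p v) x &
      ~ (exists a, [/\ sub_arrow p S a, atgt p a = v & alab p a = x])]].

Definition subpath_tgt V (p : rpath V) (S : nat -> Prop) : set V :=
  [set x | exists v, [/\ S v, etgt (nlab p v) x &
      ~ (exists a, [/\ sub_arrow p S a, asrc p a = v & alab p a = x])]].

Definition ends V (p : rpath V) (e : nat) : nat -> Prop :=
  fun v => v = asrc p e \/ v = atgt p e.

Definition glue_lab V (p : rpath V) (e : nat) : edge V :=
  (subpath_src p (ends p e), subpath_tgt p (ends p e)).

(* gluing q(p, e): node atgt e is merged into node asrc e (the merged node
   v* gets number [node_shift y x]); arrow e is removed and the other arrows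
   are renumbered by [pi e]. *)
Definition node_shift (y v : nat) : nat := if v < y then v else v.-1.
Definition node_map (x y v : nat) : nat :=
  if v == y then node_shift y x else node_shift y v.
Definition node_unshift (y w : nat) : nat := if w < y then w else w.+1.

Definition pi (e j : nat) : nat := if j < e then j else j.-1.
Definition arr_unshift (e j : nat) : nat := if j < e then j else j.+1.

Definition glue V (p : rpath V) (e : nat) : rpath V :=
  let x := asrc p e in let y := atgt p e in
  RPath (nn p).-1 (na p).-1
    (fun w => if w == node_shift y x then glue_lab p e
              else nlab p (node_unshift y w))
    (fun j => node_map x y (asrc p (arr_unshift e j)))
    (fun j => node_map x y (atgt p (arr_unshift e j)))
    (fun j => alab p (arr_unshift e j)).

Definition glue_seq V (p : rpath V) (es : seq nat) : rpath V := foldl (@glue V) p es.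

Fixpoint valid_gs V (p : rpath V) (es : seq nat) : Prop :=
  match es with
  | [::] => True
  | e :: es' => e < na p /\ valid_gs (glue p e) es'
  end.

(* identification of gluing sequences up to isomorphisms of the corresponding
   paths identifying corresponding breaks *)
Definition gs_equiv V (p : rpath V) (es : seq nat) (p' : rpath V) (es' : seq nat)
  : Prop :=
  size es = size es' /\
  forall j, j < size es ->
    exists phi psi,
      path_iso (glue_seq p (take j es)) (glue_seq p' (take j es')) phi psi /\
      psi (nth 0 es j) = nth 0 es' j.

Definition break_tuple V (p : rpath V) (k : nat) (ds : seq nat) : Prop :=
  [/\ size ds = k, uniq ds & all (fun d => d < na p) ds].

Fixpoint tup2gs_aux (n : nat) (ds : seq nat) : seq nat :=
  match n, ds with
  | n'.+1, d :: ds' => d :: tup2gs_aux n' (map (pi d) ds')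
  | _, _ => [::]
  end.
Definition tup2gs (ds : seq nat) : seq nat := tup2gs_aux (size ds) ds.

(* Main.v *)
Require Import Defs.
From mathcomp Require Import ssreflect ssrfun ssrbool eqtype ssrnat seq.
From mathcomp Require Import boolp classical_sets.
From mathcomp Require Import div fintype.
From Stdlib Require Import Relations Lia.
From mathcomp Require Import zify.

Set Implicit Arguments.
Unset Strict Implicit.
Unset Printing Implicit Defensive.

Section Sec_TA.
Local Open Scope classical_set_scope.

Section Graph.
Variable V : Type.
Variable p : rpath V.

Definition uadjE (E : nat -> Prop) (x y : nat) : Prop :=
  exists a, [/\ a < na p, E a &
    ((asrc p a = x /\ atgt p a = y) \/ (asrc p a = y /\ atgt p a = x))].

Fixpoint within (E : nat -> Prop) (k u : nat) : Prop :=
  match k with 0 => u = 0 | k'.+1 => u = 0 \/ exists v, uadjE E u v /\ within E k' v end.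

Lemma within_S E k u : within E k u -> within E k.+1 u.
Proof.
elim: k u => [|k IH] u /=; first by left.
case=> [->|[v [Ruv Hv]]]; [by left|right; exists v; split => //; exact: IH].
Qed.

Lemma within_le E k k' u : k <= k' -> within E k u -> within E k' u.
Proof.
move=> /subnKC <-; elim: (k' - k) => [|d IH]; first by rewrite addn0.
by move=> H; rewrite addnS; apply: within_S; apply: IH.
Qed.

Lemma uadjE_sym E x y : uadjE E x y -> uadjE E y x.
Proof. by case=> a [? ? [[? ?]|[? ?]]]; exists a; split => //; [right|left]. Qed.

Lemma crt_within E u : clos_refl_trans nat (uadjE E) 0 u -> exists k, within E k u.
Proof.
move/clos_rt_rtn1_iff; elim => [|y z Ryz _ [k Hk]]; first by exists 0.
by exists k.+1; right; exists y; split => //; apply: uadjE_sym.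
Qed.

Hypothesis Hr : forall a, a < na p -> asrc p a < nn p /\ atgt p a < nn p.

Lemma inj_arrows E :
  (forall x y, x < nn p -> y < nn p -> clos_refl_trans nat (uadjE E) x y) ->
  exists f : nat -> nat, (forall u, 0 < u < nn p -> f u < na p /\ E (f u)) /\
     (forall u w, 0 < u < nn p -> 0 < w < nn p -> f u = f w -> u = w).
Proof.
move=> conn.
have ex_d u : u < nn p -> exists k, `[< within E k u >].
  move=> Hu; have [k Hk] : exists k, within E k u.
    apply: crt_within; apply: conn => //.
    by apply: leq_ltn_trans Hu.
  by exists k; apply/asboolP.
pose d u := if pselect (u < nn p) is left Hu then ex_minn (ex_d u Hu) else 0.
have dP u : u < nn p -> within E (d u) u /\ forall k, within E k u -> d u <= k.
  move=> Hu; rewrite /d; case: pselect => // Hu'.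
  case: ex_minnP => m /asboolP Hm Hmin; split => // k /asboolP Hk.
  exact: Hmin.
have step u : exists a, 0 < u < nn p ->
   exists v, [/\ a < na p, E a, v < nn p, d v < d u &
      ((asrc p a = u /\ atgt p a = v) \/ (asrc p a = v /\ atgt p a = u))].
  case: (EM (0 < u < nn p)) => [/andP [u0 Hu]|Hn]; last by exists 0.
  have [Hw Hmin] := dP u Hu.
  move: Hw Hmin; case: (d u) => [/= E0|k /= [E0|[v [[a [a1 a2 a3]] Hv]]]] Hmin.
  - by move: u0; rewrite E0.
  - by move: u0; rewrite E0.
  have vn : v < nn p.
    by have [r1 r2] := Hr a1; case: a3 => [[_ <-]|[<- _]].
  exists a => _; exists v; split => //.
  have [_ Hm] := dP v vn; exact: leq_ltn_trans (Hm _ Hv) _.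
have [f Hf] := choice step.
exists f; split.
  by move=> u Hu; have [v [? ? _ _ _]] := Hf u Hu.
move=> u w Hu Hw Efw.
have [vu [_ _ _ du ou]] := Hf u Hu.
have [vw [_ _ _ dw ow]] := Hf w Hw.
rewrite Efw in ou; move: ou ow; set a := f w => ou ow.
case: (EM (u = w)) => // nuw.
case: ou => [[s1 t1]|[s1 t1]]; case: ow => [[s2 t2]|[s2 t2]].
  by exfalso; apply: nuw; rewrite -s1 -s2.
  have e1 : vw = u by rewrite -s2 -s1.
  have e2 : vu = w by rewrite -t1 -t2.
  by rewrite e1 in dw; rewrite e2 in du; move: (ltn_trans du dw); rewrite ltnn.
  have e1 : vw = u by rewrite -t2 -t1.
  have e2 : vu = w by rewrite -s1 -s2.
  by rewrite e1 in dw; rewrite e2 in du; move: (ltn_trans du dw); rewrite ltnn.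
  by exfalso; apply: nuw; rewrite -t1 -t2.
Qed.

Lemma crt_uadjE_sym E x y : clos_refl_trans nat (uadjE E) x y -> clos_refl_trans nat (uadjE E) y x.
Proof.
elim => [u v /uadjE_sym H|u|u v w _ H1 _ H2]; [exact: rt_step|exact: rt_refl|exact: rt_trans H2 H1].
Qed.

Lemma conn_E E (conn : forall x y, x < nn p -> y < nn p -> clos_refl_trans nat (uadj p) x y) :
  (forall a, a < na p -> ~ E a -> clos_refl_trans nat (uadjE E) (asrc p a) (atgt p a)) ->
  forall x y, x < nn p -> y < nn p -> clos_refl_trans nat (uadjE E) x y.
Proof.
move=> HE x y Hx Hy; elim: (conn x y Hx Hy) => [u v [a [Ha o]]|u|u v w _ H1 _ H2].
- case: (EM (E a)) => Ea; first by apply: rt_step; exists a; split.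
  case: o => [[<- <-]|[<- <-]]; first exact: HE.
  by apply: crt_uadjE_sym; apply: HE.
- exact: rt_refl.
- exact: rt_trans H1 H2.
Qed.

Lemma redundant_false a0 : is_tree p -> a0 < na p ->
  (clos_refl_trans nat (uadjE (fun a => a <> a0)) (asrc p a0) (atgt p a0)) -> False.
Proof.
case=> n0 En Hr' conn Ha0 Hred.
have := @inj_arrows (fun a => a <> a0) (conn_E conn _).
case.
  move=> a Ha; case: (EM (a = a0)) => [->|Hn] // _; by [].
move=> f [f1 f2].
have Hu : uniq (map f (iota 1 (na p))).
  rewrite map_inj_in_uniq ?iota_uniq // => u w; rewrite !mem_iota add1n En => Hu1 Hw1.
  exact: f2 Hu1 Hw1.
have Hs : {subset map f (iota 1 (na p)) <= rem a0 (iota 0 (na p))}.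
  move=> b /mapP [u]; rewrite mem_iota add1n En => Hu2 ->.
  have [Hf1 Hf2] := f1 u Hu2.
  rewrite (mem_rem_uniq _ (iota_uniq _ _)) inE mem_iota /=.
  by apply/andP; split; [apply/eqP|].
have := uniq_leq_size Hu Hs.
rewrite size_map size_iota size_rem ?size_iota ?mem_iota //.
by case: (na p) Ha0 => // n _; rewrite ltnn.
Qed.
End Graph.

Lemma tree_ranges V (p : rpath V) : is_tree p -> forall a, a < na p -> asrc p a < nn p /\ atgt p a < nn p.
Proof. by case. Qed.

Lemma no_loop V (p : rpath V) a : is_tree p -> a < na p -> asrc p a <> atgt p a.
Proof.
move=> T Ha E; apply: (redundant_false (tree_ranges T) T Ha).
rewrite E; exact: rt_refl.
Qed.

Lemma no_multi V (p : rpath V) a b : is_tree p -> a < na p -> b < na p -> a <> b ->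
  (asrc p a = asrc p b /\ atgt p a = atgt p b) \/ (asrc p a = atgt p b /\ atgt p a = asrc p b) ->
  False.
Proof.
move=> T Ha Hb Hab o; apply: (redundant_false (tree_ranges T) T Hb).
apply: rt_step; exists a; split => //.
Qed.

End Sec_TA.

Section Sec_OC.
Local Open Scope classical_set_scope.

Lemma uniq_flatten_map (T U : eqType) (F : T -> seq U) (rs : seq T) :
  uniq rs -> (forall r, r \in rs -> uniq (F r)) ->
  (forall r r' x, r \in rs -> r' \in rs -> r != r' -> x \in F r -> x \notin F r') ->
  uniq (flatten (map F rs)).
Proof.
elim: rs => //= r rs IH /andP [nr urs] HF Hd.
rewrite cat_uniq HF ?mem_head //= IH //; last first.
- by move=> a b x Ha Hb; apply: Hd; rewrite inE ?Ha ?Hb orbT.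
- by move=> a Ha; apply: HF; rewrite inE Ha orbT.
rewrite andbT; apply/hasPn => x /flattenP [s /mapP [r' Hr' Es] Hx].
rewrite Es in Hx.
apply: (Hd r' r) => //; rewrite ?inE ?Hr' ?eqxx ?orbT //.
by apply/eqP => E; move: nr; rewrite -E Hr'.
Qed.

Lemma size_flatten_const (T : eqType) (ss : seq (seq T)) m :
  (forall s, s \in ss -> size s = m) -> size (flatten ss) = m * size ss.
Proof.
elim: ss => [|s ss IH] H /=; first by rewrite muln0.
rewrite size_cat IH ?H ?mem_head //=; first by rewrite mulnS.
by move=> s' Hs'; apply: H; rewrite inE Hs' orbT.
Qed.

Section Orbit.
Variables (N m : nat) (t : nat -> nat).
Hypotheses (m0 : 0 < m) (tN : forall x, x < N -> t x < N)
  (tinj : forall x y, x < N -> y < N -> t x = t y -> x = y)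
  (tm : forall x, x < N -> iter m t x = x)
  (tfree : forall x j, x < N -> 0 < j < m -> iter j t x <> x).

Lemma itN j x : x < N -> iter j t x < N.
Proof. by elim: j => //= j IH Hx; apply: tN; apply: IH. Qed.

Lemma itinj j x y : x < N -> y < N -> iter j t x = iter j t y -> x = y.
Proof.
elim: j x y => //= j IH x y Hx Hy E; apply: IH => //; apply: tinj => //; exact: itN.
Qed.

Lemma itmod j x : x < N -> iter j t x = iter (j %% m) t x.
Proof.
move=> Hx; rewrite {1}(divn_eq j m) iterD.
have Hy := itN (j %% m) Hx; move: (iter _ t x) Hy => y Hy.
elim: (j %/ m) => [|q IH]; first by rewrite mul0n.
by rewrite mulSn iterD IH tm.
Qed.

Definition isrep r := all (fun j => r <= iter j t r) (iota 0 m).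
Definition reps := filter isrep (iota 0 N).
Definition orb r := map (fun j => iter j t r) (iota 0 m).

Lemma isrepP r j : r < N -> isrep r -> r <= iter j t r.
Proof.
move=> Hr /allP H; rewrite itmod //; apply: H; rewrite mem_iota /= add0n ltn_mod //.
Qed.

Lemma orb_uniq r : r < N -> uniq (orb r).
Proof.
move=> Hr; rewrite map_inj_in_uniq ?iota_uniq // => i j.
rewrite !mem_iota /= !add0n => Hi Hj E.
wlog lt : i j Hi Hj E / i <= j.
  move=> W; case: (leqP i j) => [l|/ltnW l]; first exact: W.
  by apply/esym; apply: W.
case: (ltngtP i j) lt => // l _.
exfalso; apply: (tfree (x := r) (j := j - i)) => //.
  by rewrite subn_gt0 l /=; apply: leq_ltn_trans (leq_subr _ _) Hj.
apply: (itinj (j := i)); [exact: itN|done|].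
by rewrite -iterD subnKC // ltnW.
Qed.

Lemma reps_disj r r' x : r \in reps -> r' \in reps -> r != r' -> x \in orb r -> x \notin orb r'.
Proof.
rewrite !mem_filter !mem_iota /= !add0n => /andP [Rr Hr] /andP [Rr' Hr'] neq.
move=> /mapP [i]; rewrite mem_iota add0n /= => Hi ->.
apply/negP => /mapP [j]; rewrite mem_iota add0n /= => Hj E.
have E1 : r' = iter (m - j + i) t r.
  by rewrite iterD E -iterD subnK ?tm // ltnW.
have E2 : r = iter (m - i + j) t r'.
  by rewrite iterD -E -iterD subnK ?tm // ltnW.
have l1 := isrepP (m - j + i) Hr Rr; rewrite -E1 in l1.
have l2 := isrepP (m - i + j) Hr' Rr'; rewrite -E2 in l2.
by move: neq; rewrite eqn_leq l1 l2.
Qed.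

Lemma orb_cover x : x < N -> exists2 r, r \in reps & x \in orb r.
Proof.
move=> Hx.
have ex : exists v, [exists j : 'I_m, iter j t x == v].
  by exists x; apply/existsP; exists (Ordinal m0); rewrite eqxx.
case: (ex_minnP ex) => v /existsP [[j0 Hj0] /eqP /= Ev] Hmin.
exists v.
  rewrite mem_filter mem_iota /= add0n -Ev itN // andbT.
  apply/allP => j; rewrite mem_iota add0n /= => Hj.
  rewrite -iterD (itmod (j + j0)) // Ev; apply: Hmin; apply/existsP.
  by exists (Ordinal (ltn_pmod (j + j0) m0)).
have Hv : v < N by rewrite -Ev itN.
apply/mapP; exists ((m - j0) %% m); first by rewrite mem_iota add0n ltn_pmod.
by rewrite -(itmod _ Hv) -Ev -iterD subnK ?tm // ltnW.
Qed.

Lemma orbit_div : m %| N.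
Proof.
have P : perm_eq (flatten (map orb reps)) (iota 0 N).
  apply: uniq_perm; rewrite ?iota_uniq //.
    apply: uniq_flatten_map; first by rewrite filter_uniq ?iota_uniq.
      by move=> r; rewrite mem_filter mem_iota add0n => /andP [_ Hr]; apply: orb_uniq.
    exact: reps_disj.
  move=> x; rewrite mem_iota add0n /=; apply/idP/idP.
    move=> /flattenP [s /mapP [r Hr ->]] /mapP [j _ ->].
    by apply: itN; move: Hr; rewrite mem_filter mem_iota add0n => /andP [].
  by move=> Hx; have [r Hr Hx'] := orb_cover Hx; apply/flattenP; exists (orb r) => //; apply: map_f.
have := perm_size P; rewrite size_iota (size_flatten_const (m := m)).
  by move=> E; rewrite -E; apply: dvdn_mulr.
by move=> s /mapP [r _ ->]; rewrite size_map size_iota.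
Qed.
End Orbit.

End Sec_OC.

Section Sec_TB.
Local Open Scope classical_set_scope.

Lemma iso_id V (p : rpath V) : path_iso p p id id.
Proof.
split; first by split => // v Hv; exists v.
split; first by split => // a Ha; exists a.
by split.
Qed.

Lemma iso_comp V (p p' p'' : rpath V) phi psi phi' psi' :
  path_iso p p' phi psi -> path_iso p' p'' phi' psi' ->
  path_iso p p'' (phi' \o phi) (psi' \o psi).
Proof.
move=> [[n1 n2 n3] [[a1 a2 a3] [l1 l2]]] [[n1' n2' n3'] [[a1' a2' a3'] [l1' l2']]].
split; [split|split; [split|split]].
- by move=> v Hv /=; apply: n1'; apply: n1.
- by move=> v w Hv Hw /= E; apply: n2 => //; apply: n2' => //; apply: n1.
- move=> v Hv; have [w Hw <-] := n3' v Hv; have [u Hu <-] := n3 w Hw; by exists u.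
- by move=> a Ha /=; apply: a1'; apply: a1.
- by move=> a b Ha Hb /= E; apply: a2 => //; apply: a2' => //; apply: a1.
- move=> a Ha; have [w Hw <-] := a3' a Ha; have [u Hu <-] := a3 w Hw; by exists u.
- by move=> v Hv /=; rewrite l1' ?l1 //; apply: n1.
- move=> a Ha /=; have [s1 s2 s3] := l2 a Ha; have [s1' s2' s3'] := l2' (psi a) (a1 a Ha).
  by rewrite s1' s2' s3' s1 s2 s3.
Qed.

Lemma iso_iter V (p : rpath V) phi psi j :
  path_iso p p phi psi -> path_iso p p (iter j phi) (iter j psi).
Proof.
move=> I; elim: j => [|j IH]; first exact: iso_id.
exact: (iso_comp IH I).
Qed.

Lemma auto_fix V (H : set (edge V)) (q : rpath V) phi psi v0 :
  is_path H q -> path_iso q q phi psi -> v0 < nn q -> phi v0 = v0 ->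
  (forall v, v < nn q -> phi v = v) /\ (forall a, a < na q -> psi a = a).
Proof.
move=> [T _ _ ds dt] I Hv0 F0.
have [[n1 n2 n3] [[a1 a2 a3] [l1 l2]]] := I.
have arr_src a : a < na q -> phi (asrc q a) = asrc q a -> psi a = a.
  move=> Ha Fs; have [s1 s2 s3] := l2 a Ha.
  case: (EM (psi a = a)) => // ne; exfalso.
  by apply: (ds (psi a) a (a1 a Ha) Ha ne); rewrite ?s1 ?s3.
have arr_tgt a : a < na q -> phi (atgt q a) = atgt q a -> psi a = a.
  move=> Ha Fs; have [s1 s2 s3] := l2 a Ha.
  case: (EM (psi a = a)) => // ne; exfalso.
  by apply: (dt (psi a) a (a1 a Ha) Ha ne); rewrite ?s2 ?s3.
have prop x y : uadj q x y -> phi x = x -> phi y = y.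
  move=> [a [Ha [[<- <-]|[<- <-]]]] Fx.
    by have [_ s2 _] := l2 a Ha; rewrite -s2 arr_src.
  by have [s1 _ _] := l2 a Ha; rewrite -s1 arr_tgt.
have allF v : v < nn q -> phi v = v.
  move=> Hv; case: T => _ _ _ conn.
  elim: (conn v0 v Hv0 Hv) F0 => [x y|x|x y z _ IH1 _ IH2] //.
    exact: prop.
  by move=> Fx; apply: IH2; apply: IH1.
split => // a Ha; apply: arr_src => //; apply: allF.
by have [r _] := tree_ranges T Ha.
Qed.

Lemma pigeon_iter N (f : nat -> nat) x : x < N -> (forall y, y < N -> f y < N) ->
  (forall y z, y < N -> z < N -> f y = f z -> y = z) ->
  exists j, 0 < j /\ iter j f x = x.
Proof.
move=> Hx fN finj.
have itNy i y : y < N -> iter i f y < N by elim: i => //= i IH Hy; apply: fN; apply: IH.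
have itN i : iter i f x < N by apply: itNy.
have itinj i y z : y < N -> z < N -> iter i f y = iter i f z -> y = z.
  elim: i y z => //= i IH y z Hy Hz E; apply: IH => //.
  by apply: finj => //; apply: itNy.
case: (EM (exists i j, [/\ i < j, j <= N & iter i f x = iter j f x])).
  move=> [i [j [lij jN E]]]; exists (j - i); split; first by rewrite subn_gt0.
  apply: (itinj i); [exact: itNy|done|].
  by rewrite -iterD subnKC // ltnW.
move=> nE; exfalso.
have U : uniq (map (fun j => iter j f x) (iota 0 N.+1)).
  rewrite map_inj_in_uniq ?iota_uniq // => i j; rewrite !mem_iota !add0n /= => Hi Hj E.
  case: (ltngtP i j) => // l; exfalso; apply: nE.
    by exists i, j; split.
  by exists j, i; split.
have S : {subset map (fun j => iter j f x) (iota 0 N.+1) <= iota 0 N}.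
  by move=> y /mapP [j _ ->]; rewrite mem_iota add0n itN.
by have := uniq_leq_size U S; rewrite size_map !size_iota ltnn.
Qed.

Lemma auto_trivial V (H : set (edge V)) (q : rpath V) phi psi :
  is_path H q -> path_iso q q phi psi -> forall a, a < na q -> psi a = a.
Proof.
move=> P I.
have [T _ _ _ _] := P.
have [n0 En _ _] := T.
have [[n1 n2 n3] [[a1 a2 a3] [l1 l2]]] := I.
have ex : exists j, (0 < j) && (iter j phi 0 == 0).
  have [j [j0 Ej]] := pigeon_iter n0 n1 n2; by exists j; rewrite j0 Ej eqxx.
case: (ex_minnP ex) => m /andP [m0 /eqP Em] Hmin.
have Im := iso_iter m I.
have [Fm Gm] := auto_fix P Im n0 Em.
have free j v : v < nn q -> 0 < j < m -> iter j phi v <> v.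
  move=> Hv /andP [j0 jm] Ej.
  have [Fj _] := auto_fix P (iso_iter j I) Hv Ej.
  have := Hmin j; rewrite j0 Fj // eqxx => /(_ isT); by rewrite leqNgt jm.
have freea j a : a < na q -> 0 < j < m -> iter j psi a <> a.
  move=> Ha Hj Ej; have [_ [_ [_ lj]]] := iso_iter j I.
  have [s1 _ _] := lj a Ha; rewrite Ej in s1.
  apply: (free j (asrc q a)) => //; first by case: (tree_ranges T Ha).
have d1 : m %| nn q.
  exact: (orbit_div m0 n1 n2 Fm (fun x j Hx Hj => free j x Hx Hj)).
have d2 : m %| na q.
  exact: (orbit_div m0 a1 a2 Gm (fun x j Hx Hj => freea j x Hx Hj)).
have : m %| 1.
  have := dvdn_sub d1 d2; by rewrite -En subSnn.
rewrite dvdn1 => /eqP m1; rewrite m1 /= in Em.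
by have [_ G] := auto_fix P I n0 Em.
Qed.

End Sec_TB.

Section Sec_TC.
Local Open Scope classical_set_scope.

Lemma ns_lt n y v : v < n -> v <> y -> y < n -> node_shift y v < n.-1.
Proof. rewrite /node_shift => Hv nvy Hy; case: (ltnP v y) => l; rewrite -?subn1; lia. Qed.

Lemma nu_lt n y w : w < n.-1 -> node_unshift y w < n.
Proof. rewrite /node_unshift => Hw; case: (ltnP w y) => l; rewrite -?subn1 in Hw *; lia. Qed.

Lemma nu_neq y w : node_unshift y w <> y.
Proof. rewrite /node_unshift; case: (ltnP w y) => l; lia. Qed.

Lemma ns_nu y w : node_shift y (node_unshift y w) = w.
Proof. rewrite /node_shift /node_unshift; case: (ltnP w y) => l; [rewrite l //|]; case: ltnP => l'; rewrite -?subn1; lia. Qed.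

Lemma nu_ns y v : v <> y -> node_unshift y (node_shift y v) = v.
Proof. rewrite /node_shift /node_unshift => nvy; case: (ltnP v y) => l; [rewrite l //|]; case: ltnP => l'; rewrite -?subn1 in l' *; lia. Qed.

Lemma ns_inj y u v : u <> y -> v <> y -> node_shift y u = node_shift y v -> u = v.
Proof. by move=> hu hv E; rewrite -(nu_ns hu) -(nu_ns hv) E. Qed.

Lemma nm_eq x y u v : node_map x y u = node_map x y v -> x <> y ->
  u = v \/ ((u = x \/ u = y) /\ (v = x \/ v = y)).
Proof.
rewrite /node_map => E nxy; case: (eqVneq u y) E => [->|nuy]; case: (eqVneq v y) => [->|nvy] //= E.
- by left.
- by right; split; [right|left; apply/esym; apply: (ns_inj nxy _ E); apply/eqP].
- by right; split; [left; apply: (ns_inj _ nxy E); apply/eqP|right].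
- by left; apply: (ns_inj _ _ E); apply/eqP.
Qed.

Lemma nm_nu x y w : node_map x y (node_unshift y w) = w.
Proof. by rewrite /node_map; case: eqP => [/nu_neq //|_]; rewrite ns_nu. Qed.

Lemma nm_lt n x y v : v < n -> x < n -> y < n -> x <> y -> node_map x y v < n.-1.
Proof.
rewrite /node_map => Hv Hx Hy nxy; case: eqP => [_|nvy]; first exact: ns_lt.
exact: ns_lt.
Qed.

Lemma pi_lt n e a : a < n -> a <> e -> e < n -> pi e a < n.-1.
Proof.
rewrite /pi => Ha nae He; case: (ltnP a e) => l; rewrite -?subn1; lia.
Qed.

Lemma au_lt n e j : j < n.-1 -> e < n -> arr_unshift e j < n.
Proof.
rewrite /arr_unshift => Hj He; case: (ltnP j e) => l; rewrite -?subn1 in Hj *; lia.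
Qed.

Lemma au_neq e j : arr_unshift e j <> e.
Proof.
rewrite /arr_unshift; case: (ltnP j e) => l; lia.
Qed.

Lemma pi_au e j : pi e (arr_unshift e j) = j.
Proof. exact: ns_nu. Qed.

Lemma au_pi e a : a <> e -> arr_unshift e (pi e a) = a.
Proof. exact: nu_ns. Qed.

Lemma au_inj e i j : arr_unshift e i = arr_unshift e j -> i = j.
Proof. by move=> E; rewrite -(pi_au e i) E pi_au. Qed.

Lemma single_mem V (A B : set V) L : A `&` B = [set L] -> A L /\ B L.
Proof. by move=> E; have : (A `&` B) L by rewrite E. Qed.

Lemma inter_single V (A B : set V) K L : A `&` B = [set K] -> A L -> B L -> A `&` B = [set L].
Proof. by move=> E HA HB; have : (A `&` B) L by []; rewrite E => /= ->. Qed.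

Lemma disj_mem V (A B : set V) z : A `&` B = set0 -> A z -> B z -> False.
Proof. by move=> E HA HB; have : (A `&` B) z by []; rewrite E. Qed.

Lemma sub_ends V (p : rpath V) e a : is_tree p -> e < na p ->
  sub_arrow p (ends p e) a -> a = e.
Proof.
move=> T He [Ha [s1 s2]]; case: (EM (a = e)) => // nae; exfalso.
case: s1 => E1; case: s2 => E2.
- by apply: (no_loop T Ha); rewrite E1 E2.
- by apply: (no_multi T Ha He nae); left.
- by apply: (no_multi T Ha He nae); right.
- by apply: (no_loop T Ha); rewrite E1 E2.
Qed.

Lemma glue_lab_eq V (p : rpath V) e : is_tree p -> e < na p ->
  glue_lab p e =
  (esrc (nlab p (asrc p e)) `|` (esrc (nlab p (atgt p e)) `\ alab p e),
   (etgt (nlab p (asrc p e)) `\ alab p e) `|` etgt (nlab p (atgt p e))).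
Proof.
move=> T He; have nxy := no_loop T He.
rewrite /glue_lab; congr pair; apply/seteqP; split => z /=.
- move=> [v [[->|->] Hz Hn]]; [by left|right; split => //].
  by move=> /= Ez; apply: Hn; exists e; split => //; split => //; split; [left|right].
- move=> [Hz|[Hz nK]].
    exists (asrc p e); split => //; first by left.
    by move=> [a [/(sub_ends T He) -> E _]]; apply: nxy.
  exists (atgt p e); split => //; first by right.
  by move=> [a [/(sub_ends T He) -> _ E]]; apply: nK.
- move=> [v [[->|->] Hz Hn]]; [left; split => //|by right].
  by move=> /= Ez; apply: Hn; exists e; split => //; split => //; split; [left|right].
- move=> [[Hz nK]|Hz].
    exists (asrc p e); split => //; first by left.
    by move=> [a [/(sub_ends T He) -> _ E]]; apply: nK.
  exists (atgt p e); split => //; first by right.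
  by move=> [a [/(sub_ends T He) -> E _]]; apply: nxy.
Qed.

Section GluePath.
Variables (V : Type) (H : set (edge V)) (p : rpath V) (e : nat).
Hypotheses (HH : is_higraph H) (P : is_path H p) (He : e < na p).

Let x := asrc p e.
Let y := atgt p e.
Let K := alab p e.
Let G := glue_lab p e.
Let g := glue p e.

Lemma gp_tree : is_tree p. Proof. by case: P. Qed.
Lemma gp_nxy : x <> y. Proof. by rewrite /x /y; apply: no_loop; [apply: gp_tree|]. Qed.
Lemma gp_xy : x < nn p /\ y < nn p. Proof. by rewrite /x /y; apply: tree_ranges; [apply: gp_tree|]. Qed.

Lemma gp_lab_nm v : v < nn p ->
  nlab g (node_map x y v) = if (v == x) || (v == y) then G else nlab p v.
Proof.
move=> Hv; rewrite /g /glue /= -/x -/y /node_map.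
case: (eqVneq v y) => [->|nvy]; rewrite ?eqxx ?orbT //=.
case: (eqVneq v x) => [->|nvx]; rewrite ?eqxx //=.
case: eqP => [E|_]; last by rewrite nu_ns //; apply/eqP.
have vx : v = x by apply: (ns_inj _ _ E); [apply/eqP|apply: gp_nxy].
by rewrite vx eqxx in nvx.
Qed.

Lemma gp_trans :
  [/\ etgt (nlab p x) `&` esrc (nlab p y) = [set K],
      esrc (nlab p x) `&` (esrc (nlab p y) `\ K) = set0,
      (etgt (nlab p x) `\ K) `&` etgt (nlab p y) = set0 &
      H G].
Proof.
have [_ Hl Hi _ _] := P; have [Hx Hy] := gp_xy.
have I := Hi e He; rewrite -/x -/y -/K in I.
have [ti _] := HH.
have [K0 [E0 [d1 [d2 HG]]]] := ti _ _ (Hl x Hx) (Hl y Hy) (ex_intro _ K (eq_ind_r (fun S => S K) erefl I)).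
have K0K : K0 = K.
  have : (etgt (nlab p x) `&` esrc (nlab p y)) K0 by rewrite E0.
  by rewrite I.
rewrite K0K in d1 d2 HG; split => //.
by rewrite /G glue_lab_eq //; apply: gp_tree.
Qed.

Lemma gp_nm_xy : node_map x y x = node_shift y x /\ node_map x y y = node_shift y x.
Proof. by rewrite /node_map eqxx; case: eqP => // E; have := gp_nxy. Qed.

Lemma gp_is_tree : is_tree g.
Proof.
have [n0 En Hr conn] := gp_tree; have [Hx Hy] := gp_xy; have nxy := gp_nxy.
have na0 : 0 < na p by apply: leq_ltn_trans He.
split => /=.
- have : x != y by apply/eqP. rewrite -?subn1; lia.
- rewrite -?subn1; lia.
- move=> j Hj; have Ha := au_lt Hj He; have [r1 r2] := Hr _ Ha.
  by split; apply: nm_lt.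
- move=> w w' Hw Hw'.
  rewrite -(nm_nu x y w) -(nm_nu x y w').
  have Hu := nu_lt y Hw; have Hu' := nu_lt y Hw'.
  elim: (conn _ _ Hu Hu') => [u v [a [Ha o]]|u|u v z _ IH1 _ IH2].
  + case: (EM (a = e)) => [Ea|nae].
      have [E1 E2] := gp_nm_xy.
      case: o => [[<- <-]|[<- <-]]; rewrite Ea -/x -/y E1 E2; exact: rt_refl.
    apply: rt_step; exists (pi e a); split; first exact: pi_lt.
    by rewrite /= au_pi //; case: o => [[-> ->]|[-> ->]]; [left|right].
  + exact: rt_refl.
  + exact: rt_trans IH1 IH2.
Qed.

Lemma gp_H : forall w, w < nn g -> H (nlab g w).
Proof.
have [_ Hl _ _ _] := P; have [_ _ _ HG] := gp_trans.
move=> w /= Hw; case: eqP => _ //; apply: Hl; exact: nu_lt.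
Qed.

Lemma gp_arrow_xy a : a < na p -> a <> e ->
  ((asrc p a == x) || (asrc p a == y)) -> ((atgt p a == x) || (atgt p a == y)) -> False.
Proof.
move=> Ha nae /orP s1 /orP s2; apply: nae; apply: (sub_ends gp_tree He).
split => //; split; [case: s1 => /eqP ->; [by left|by right]|case: s2 => /eqP ->; [by left|by right]].
Qed.

Lemma gp_inter j : j < na g ->
  etgt (nlab g (asrc g j)) `&` esrc (nlab g (atgt g j)) = [set alab g j].
Proof.
have [T Hl Hi ds dt] := P; have [I d1 d2 HG] := gp_trans; have [ti _] := HH.
move=> Hj; have Ha := au_lt Hj He; have nae := @au_neq e j.
move: Ha nae; set a := arr_unshift e j => Ha nae.
have [ul vl] := tree_ranges T Ha.
change (etgt (nlab g (node_map x y (asrc p a))) `&` esrc (nlab g (node_map x y (atgt p a)))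
   = [set alab p a]).
rewrite !gp_lab_nm //.
have Ia := Hi a Ha; have [Lt Ls] := single_mem Ia.
case Eu: ((asrc p a == x) || (asrc p a == y)); case Ev: ((atgt p a == x) || (atgt p a == y)).
- by exfalso; apply: (gp_arrow_xy Ha nae); rewrite ?Eu ?Ev.
- have LG : etgt G (alab p a).
    rewrite /G glue_lab_eq //=; case/orP: Eu => /eqP Eu; rewrite Eu in Lt.
      left; split => // EL; exact: (ds a e Ha He nae Eu EL).
    by right.
  have [K1 [E1 _]] := ti _ _ HG (Hl _ vl) (ex_intro _ (alab p a) (conj LG Ls)).
  exact: inter_single E1 LG Ls.
- have LG : esrc G (alab p a).
    rewrite /G glue_lab_eq //=; case/orP: Ev => /eqP Ev; rewrite Ev in Ls.
      by left.
    right; split => // EL; exact: (dt a e Ha He nae Ev EL).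
  have [K1 [E1 _]] := ti _ _ (Hl _ ul) HG (ex_intro _ (alab p a) (conj Lt LG)).
  exact: inter_single E1 Lt LG.
- exact: Ia.
Qed.

Lemma gp_ds j j' : j < na g -> j' < na g -> j <> j' -> asrc g j = asrc g j' ->
  alab g j <> alab g j'.
Proof.
have [T Hl Hi ds dt] := P; have [I d1 d2 HG] := gp_trans.
move=> Hj Hj' njj' /= E EL.
have Ha := au_lt Hj He; have Hb := au_lt Hj' He.
have nae := @au_neq e j; have nbe := @au_neq e j'.
have nab : arr_unshift e j <> arr_unshift e j' by move/au_inj.
move: Ha Hb nae nbe nab E EL; set a := arr_unshift e j; set b := arr_unshift e j'.
move=> Ha Hb nae nbe nab E EL.
have [Lt _] := single_mem (Hi a Ha); have [Lt' _] := single_mem (Hi b Hb).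
case: (nm_eq E gp_nxy) => [E'|[[Ea|Ea] [Eb|Eb]]].
- exact: ds a b Ha Hb nab E' EL.
- by apply: (ds a b Ha Hb nab _ EL); rewrite Ea Eb.
- rewrite Ea in Lt; rewrite Eb -EL in Lt'.
  apply: (disj_mem d2 _ Lt'); split => // EK; exact: (ds a e Ha He nae Ea EK).
- rewrite Ea EL in Lt; rewrite Eb in Lt'.
  apply: (disj_mem d2 _ Lt); split => // EK; exact: (ds b e Hb He nbe Eb EK).
- by apply: (ds a b Ha Hb nab _ EL); rewrite Ea Eb.
Qed.

Lemma gp_dt j j' : j < na g -> j' < na g -> j <> j' -> atgt g j = atgt g j' ->
  alab g j <> alab g j'.
Proof.
have [T Hl Hi ds dt] := P; have [I d1 d2 HG] := gp_trans.
move=> Hj Hj' njj' /= E EL.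
have Ha := au_lt Hj He; have Hb := au_lt Hj' He.
have nae := @au_neq e j; have nbe := @au_neq e j'.
have nab : arr_unshift e j <> arr_unshift e j' by move/au_inj.
move: Ha Hb nae nbe nab E EL; set a := arr_unshift e j; set b := arr_unshift e j'.
move=> Ha Hb nae nbe nab E EL.
have [_ Ls] := single_mem (Hi a Ha); have [_ Ls'] := single_mem (Hi b Hb).
case: (nm_eq E gp_nxy) => [E'|[[Ea|Ea] [Eb|Eb]]].
- exact: dt a b Ha Hb nab E' EL.
- by apply: (dt a b Ha Hb nab _ EL); rewrite Ea Eb.
- rewrite Ea in Ls; rewrite Eb -EL in Ls'.
  apply: (disj_mem d1 Ls); split => // EK; exact: (dt b e Hb He nbe Eb (etrans (esym EL) EK)).
- rewrite Ea EL in Ls; rewrite Eb in Ls'.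
  apply: (disj_mem d1 Ls'); split => // EK; exact: (dt a e Ha He nae Ea (etrans EL EK)).
- by apply: (dt a b Ha Hb nab _ EL); rewrite Ea Eb.
Qed.

Lemma glue_path : is_path H g.
Proof.
split; [exact: gp_is_tree|exact: gp_H|exact: gp_inter|exact: gp_ds|exact: gp_dt].
Qed.
End GluePath.

End Sec_TC.

Section Sec_TD.
Local Open Scope classical_set_scope.

Lemma tup2gs_cons d ds : tup2gs (d :: ds) = d :: tup2gs (map (pi d) ds).
Proof. by rewrite /tup2gs /= size_map. Qed.

Lemma tup2gs_nil : tup2gs [::] = [::].
Proof. by []. Qed.

Lemma size_tup2gs ds : size (tup2gs ds) = size ds.
Proof.
move: {2}(size ds) (erefl (size ds)) => n; elim: n ds => [|n IH] [|d ds] // E.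
by rewrite tup2gs_cons /= IH // size_map; case: E.
Qed.

Lemma pi_inj_in d a b : a <> d -> b <> d -> pi d a = pi d b -> a = b.
Proof. by move=> ha hb E; rewrite -(au_pi ha) -(au_pi hb) E. Qed.

Lemma uniq_map_pi d ds : d \notin ds -> uniq ds -> uniq (map (pi d) ds).
Proof.
move=> nd u; rewrite map_inj_in_uniq // => a b Ha Hb; apply: pi_inj_in.
  by move=> E; move: nd; rewrite -E Ha.
by move=> E; move: nd; rewrite -E Hb.
Qed.

Lemma all_map_pi d n ds : d \notin ds -> d < n -> all (fun a => a < n) ds ->
  all (fun a => a < n.-1) (map (pi d) ds).
Proof.
move=> nd Hd /allP H; apply/allP => b /mapP [a Ha ->]; apply: pi_lt; first exact: H.
  by move=> E; move: nd; rewrite -E Ha.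
done.
Qed.

Lemma map_au_pi d ds : d \notin ds -> map (arr_unshift d) (map (pi d) ds) = ds.
Proof.
move=> nd; rewrite -map_comp; rewrite -[RHS]map_id; apply/eq_in_map => a Ha /=.
by apply: au_pi => E; move: nd; rewrite -E Ha.
Qed.

Lemma valid_tup V (q : rpath V) ds : uniq ds -> all (fun a => a < na q) ds ->
  valid_gs q (tup2gs ds).
Proof.
move: {2}(size ds) (erefl (size ds)) => n; elim: n q ds => [|n IH] q [|d ds] // E.
move=> /andP [nd u] /andP [Hd Ha]; rewrite tup2gs_cons /=; split => //.
apply: IH; [by rewrite size_map; case: E|exact: uniq_map_pi|exact: all_map_pi].
Qed.

Lemma tup2gs_inj ds ds' : uniq ds -> uniq ds' -> tup2gs ds = tup2gs ds' -> ds = ds'.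
Proof.
move: {2}(size ds) (erefl (size ds)) => n.
elim: n ds ds' => [|n IH] ds ds' Eds u u' E;
  have Es : size ds' = size ds by rewrite -size_tup2gs -E size_tup2gs.
  by move: Eds Es u u' E; case: ds => [|d ds]; case: ds' => [|d' ds'].
move: Eds Es u u' E; case: ds => [|d ds]; case: ds' => [|d' ds'] // Eds Es /andP [nd u] /andP [nd' u'].
rewrite !tup2gs_cons => -[Ed Er].
rewrite -Ed in nd' Er *; congr cons.
rewrite -(map_au_pi nd) -(map_au_pi nd'); congr map; apply: IH => //.
  by rewrite size_map; case: Eds.
  exact: uniq_map_pi.
exact: uniq_map_pi.
Qed.

Lemma glue_seq_cons V (q : rpath V) e es : glue_seq q (e :: es) = glue_seq (glue q e) es.
Proof. by []. Qed.

Lemma gs_equiv_inj V (H : set (edge V)) es es' (q : rpath V) :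
  is_higraph H -> is_path H q -> valid_gs q es -> gs_equiv q es q es' -> es = es'.
Proof.
move=> HH; elim: es es' q => [|e es IH] [|e' es'] q P Hv [Es Eq] //.
case: Hv => He Hv.
have [phi [psi [I Ep]]] := Eq 0 isT.
rewrite /= in I Ep; rewrite (auto_trivial P I He) in Ep; rewrite -Ep.
congr cons; apply: (IH es' (glue q e)) => //; first exact: glue_path.
split; first by case: Es.
move=> j Hj; have [phi' [psi' [I' E']]] := Eq j.+1 Hj.
by exists phi', psi'; rewrite /= -Ep in I'.
Qed.

End Sec_TD.

Section Sec_TE.
Local Open Scope classical_set_scope.

Definition fib V (p : rpath V) (f : nat -> nat) (w : nat) : nat -> Prop :=
  fun v => v < nn p /\ f v = w.

Definition contrib_s V (p : rpath V) (F : nat -> Prop) v z : Prop :=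
  esrc (nlab p v) z /\ ~ (exists a, [/\ sub_arrow p F a, atgt p a = v & alab p a = z]).
Definition contrib_t V (p : rpath V) (F : nat -> Prop) v z : Prop :=
  etgt (nlab p v) z /\ ~ (exists a, [/\ sub_arrow p F a, asrc p a = v & alab p a = z]).

Record contr V (p q : rpath V) (S : nat -> Prop) (f g : nat -> nat) : Prop := Contr {
  c_S : forall a, S a -> a < na p;
  c_f : forall v, v < nn p -> f v < nn q;
  c_fsurj : forall w, w < nn q -> exists2 v, v < nn p & f v = w;
  c_fib : forall u v, u < nn p -> v < nn p ->
     (f u = f v <-> clos_refl_trans nat (uadjE p S) u v);
  c_g : forall b, b < na q -> g b < na p /\ ~ S (g b);
  c_ginj : forall a b, a < na q -> b < na q -> g a = g b -> a = b;
  c_gsurj : forall a, a < na p -> ~ S a -> exists2 b, b < na q & g b = a;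
  c_arr : forall b, b < na q -> [/\ asrc q b = f (asrc p (g b)),
      atgt q b = f (atgt p (g b)) & alab q b = alab p (g b)];
  c_lab : forall w, w < nn q ->
      nlab q w = (subpath_src p (fib p f w), subpath_tgt p (fib p f w));
  c_disj_s : forall u v z, u < nn p -> v < nn p -> u <> v -> f u = f v ->
      contrib_s p (fib p f (f u)) u z -> contrib_s p (fib p f (f u)) v z -> False;
  c_disj_t : forall u v z, u < nn p -> v < nn p -> u <> v -> f u = f v ->
      contrib_t p (fib p f (f u)) u z -> contrib_t p (fib p f (f u)) v z -> False }.

Lemma crt_mono (R R' : relation nat) x y : (forall u v, R u v -> R' u v) ->
  clos_refl_trans nat R x y -> clos_refl_trans nat R' x y.
Proof.
move=> HR; elim => [u v /HR|u|u v w _ H1 _ H2]; [exact: rt_step|exact: rt_refl|exact: rt_trans H1 H2].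
Qed.

Lemma crt_empty V (p : rpath V) x y : clos_refl_trans nat (uadjE p (fun _ => False)) x y -> x = y.
Proof. by elim => [u v [a [_ []]]|u|u v w _ -> _ ->]. Qed.

Lemma sub_single V (p : rpath V) (F : nat -> Prop) v0 : is_tree p ->
  (forall v, F v <-> v = v0) ->
  subpath_src p F = esrc (nlab p v0) /\ subpath_tgt p F = etgt (nlab p v0).
Proof.
move=> T HF; split; apply/seteqP; split => z /=.
- by move=> [v [/HF -> ? _]].
- move=> Hz; exists v0; split => //; first exact/HF.
  by move=> [a [[Ha [/HF E1 /HF E2]] _ _]]; apply: (no_loop T Ha); rewrite E1 E2.
- by move=> [v [/HF -> ? _]].
- move=> Hz; exists v0; split => //; first exact/HF.
  by move=> [a [[Ha [/HF E1 /HF E2]] _ _]]; apply: (no_loop T Ha); rewrite E1 E2.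
Qed.

Lemma contr_iso V (H : set (edge V)) (p q : rpath V) phi psi :
  is_path H p -> path_iso p q phi psi ->
  exists g, contr p q (fun _ => False) phi g /\ (forall a, a < na p -> g (psi a) = a).
Proof.
move=> [T _ _ _ _] [[n1 n2 n3] [[a1 a2 a3] [l1 l2]]].
have ex : forall b, exists a, b < na q -> a < na p /\ psi a = b.
  move=> b; case: (EM (b < na q)) => [Hb|Hb]; last by exists 0.
  by have [a Ha E] := a3 b Hb; exists a.
have [g Hg] := choice ex.
have gpsi a : a < na p -> g (psi a) = a.
  move=> Ha; have [G1 G2] := Hg _ (a1 a Ha); exact: a2.
exists g; split => //; split => //.
- move=> u v Hu Hv; split => [E|/crt_empty -> //]; rewrite (n2 u v Hu Hv E); exact: rt_refl.
- by move=> b Hb; have [G1 _] := Hg b Hb; split.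
- move=> a b Ha Hb E; have [_ Ea] := Hg a Ha; have [_ Eb] := Hg b Hb.
  by rewrite -Ea -Eb E.
- by move=> a Ha _; exists (psi a); [exact: a1|exact: gpsi].
- move=> b Hb; have [G1 G2] := Hg b Hb; have [s1 s2 s3] := l2 _ G1.
  by rewrite G2 in s1 s2 s3.
- move=> w Hw; have [v Hv <-] := n3 w Hw.
  have HF : forall u, fib p phi (phi v) u <-> u = v.
    by move=> u; split => [[Hu E]|->]; [exact: n2 Hu Hv E|split].
  have [E1 E2] := sub_single T HF.
  by rewrite E1 E2 l1 //; case: (nlab p v).
- by move=> u v z Hu Hv nuv E; exfalso; apply: nuv; apply: n2.
- by move=> u v z Hu Hv nuv E; exfalso; apply: nuv; apply: n2.
Qed.

Lemma fib_eq V (p : rpath V) f1 f2 v1 v2 :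
  (forall u, u < nn p -> (f1 u = v1 <-> f2 u = v2)) -> fib p f1 v1 = fib p f2 v2.
Proof.
move=> E; apply: funext => u; apply: propext; rewrite /fib; split => -[Hu Eu]; split => //.
  by apply/E.
by apply/E.
Qed.

Lemma contr_uniq V (p q1 q2 : rpath V) S1 S2 f1 g1 f2 g2 :
  is_tree p -> contr p q1 S1 f1 g1 -> contr p q2 S2 f2 g2 -> (forall a, S1 a <-> S2 a) ->
  exists phi psi, path_iso q1 q2 phi psi /\ (forall b, b < na q1 -> g2 (psi b) = g1 b).
Proof.
move=> T C1 C2 SE.
have ffE u v : u < nn p -> v < nn p -> (f1 u = f1 v <-> f2 u = f2 v).
  move=> Hu Hv; rewrite (c_fib C1 Hu Hv) (c_fib C2 Hu Hv).
  split; apply: crt_mono => x y [a [Ha Sa o]]; exists a; split => //; exact/SE.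
have exr : forall w, exists v, w < nn q1 -> v < nn p /\ f1 v = w.
  move=> w; case: (EM (w < nn q1)) => [Hw|Hw]; last by exists 0.
  by have [v Hv E] := c_fsurj C1 Hw; exists v.
have [r Hr] := choice exr.
have exh : forall b, exists c, b < na q1 -> c < na q2 /\ g2 c = g1 b.
  move=> b; case: (EM (b < na q1)) => [Hb|Hb]; last by exists 0.
  have [G1 G2] := c_g C1 Hb.
  have [c Hc E] := c_gsurj C2 G1 (fun S => G2 (proj2 (SE _) S)); by exists c.
have [h Hh] := choice exh.
exists (fun w => f2 (r w)), h; split => //.
split; [split|split; [split|split]].
- by move=> w Hw; apply: (c_f C2); have [] := Hr w Hw.
- move=> w w' Hw Hw' E; have [R1 R2] := Hr w Hw; have [R1' R2'] := Hr w' Hw'.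
  by rewrite -R2 -R2'; apply: (proj2 (ffE _ _ R1 R1')).
- move=> w2 Hw2; have [v Hv Ev] := c_fsurj C2 Hw2.
  have Hw := c_f C1 Hv; have [R1 R2] := Hr _ Hw.
  exists (f1 v) => //; rewrite -Ev; apply: (proj1 (ffE _ _ R1 Hv)); exact: R2.
- by move=> b Hb; have [] := Hh b Hb.
- move=> b b' Hb Hb' E; have [_ E1] := Hh b Hb; have [_ E2] := Hh b' Hb'.
  by apply: (c_ginj C1) => //; rewrite -E1 -E2 E.
- move=> c Hc; have [G1 G2] := c_g C2 Hc.
  have [b Hb Eb] := c_gsurj C1 G1 (fun S => G2 (proj1 (SE _) S)).
  exists b => //; have [H1 H2] := Hh b Hb; apply: (c_ginj C2) => //; by rewrite H2.
- move=> w Hw; have [R1 R2] := Hr w Hw.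
  rewrite (c_lab C2 (c_f C2 R1)) (c_lab C1 Hw).
  rewrite (@fib_eq V p f2 f1 (f2 (r w)) w) //.
  move=> u Hu; have := ffE u (r w) Hu R1; rewrite R2 => X; exact: iff_sym X.
- move=> b Hb; have [H1 H2] := Hh b Hb; have [G1 _] := c_g C1 Hb.
  have [s1 s2 s3] := c_arr C2 H1; have [t1 t2 t3] := c_arr C1 Hb.
  have [u1 u2] := tree_ranges T G1.
  rewrite s1 s2 s3 t1 t2 t3 H2; split => //.
    have [R1 R2] := Hr _ (c_f C1 u1); apply: (proj1 (ffE _ _ u1 R1)); by rewrite R2.
  have [R1 R2] := Hr _ (c_f C1 u2); apply: (proj1 (ffE _ _ u2 R1)); by rewrite R2.
by move=> b Hb; have [] := Hh b Hb.
Qed.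

End Sec_TE.

Section Sec_TF.
Local Open Scope classical_set_scope.

Lemma contrib_s_anti V (p : rpath V) (F F' : nat -> Prop) v z :
  (forall u, F u -> F' u) -> contrib_s p F' v z -> contrib_s p F v z.
Proof.
move=> FF [Hz Hn]; split => // -[a [[Ha [s1 s2]] E1 E2]]; apply: Hn.
by exists a; split => //; split => //; split; apply: FF.
Qed.

Lemma contrib_t_anti V (p : rpath V) (F F' : nat -> Prop) v z :
  (forall u, F u -> F' u) -> contrib_t p F' v z -> contrib_t p F v z.
Proof.
move=> FF [Hz Hn]; split => // -[a [[Ha [s1 s2]] E1 E2]]; apply: Hn.
by exists a; split => //; split => //; split; apply: FF.
Qed.

Section Step.
Variables (V : Type) (H : set (edge V)) (p q : rpath V) (S : nat -> Prop) (f g : nat -> nat) (e : nat).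
Hypotheses (HH : is_higraph H) (Pp : is_path H p) (Pq : is_path H q)
  (C : contr p q S f g) (He : e < na q).

Let x := asrc q e.
Let y := atgt q e.
Let K := alab q e.
Let a0 := g e.
Let xp := asrc p a0.
Let yp := atgt p a0.
Let F1 := fib p f x.
Let F2 := fib p f y.
Let F' := fib p (fun v => node_map x y (f v)) (node_shift y x).

Lemma st_Tp : is_tree p. Proof. by case: Pp. Qed.
Lemma st_Tq : is_tree q. Proof. by case: Pq. Qed.
Lemma st_nxy : x <> y. Proof. by rewrite /x /y; apply: no_loop; [apply: st_Tq|]. Qed.
Lemma st_xy : x < nn q /\ y < nn q. Proof. by rewrite /x /y; apply: tree_ranges; [apply: st_Tq|]. Qed.
Lemma st_a0 : a0 < na p /\ ~ S a0. Proof. by rewrite /a0; have := c_g C He. Qed.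
Lemma st_fa0 : [/\ f xp = x, f yp = y & alab p a0 = K].
Proof. by rewrite /x /y /K /xp /yp /a0; have [s1 s2 s3] := c_arr C He; split. Qed.
Lemma st_xpyp : xp < nn p /\ yp < nn p.
Proof. by have [Ha _] := st_a0; apply: tree_ranges Ha; apply: st_Tp. Qed.

Lemma st_Sarr b : b < na p -> S b -> f (asrc p b) = f (atgt p b).
Proof.
move=> Hb Sb; have [r1 r2] := tree_ranges st_Tp Hb.
apply/(c_fib C r1 r2); apply: rt_step; exists b; split => //; by left.
Qed.

Lemma st_inS b : b < na p -> f (asrc p b) = f (atgt p b) -> S b.
Proof.
move=> Hb E; case: (EM (S b)) => // nS; exfalso.
have [b' Hb' Eb] := c_gsurj C Hb nS.
have [s1 s2 _] := c_arr C Hb'.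
by apply: (no_loop st_Tq Hb'); rewrite s1 s2 Eb.
Qed.

Lemma st_cross b : b < na p -> f (asrc p b) = x -> f (atgt p b) = y -> b = a0.
Proof.
move=> Hb E1 E2; case: (EM (S b)) => [Sb|nS].
  by exfalso; apply: st_nxy; rewrite -E1 -E2; apply: st_Sarr.
have [b' Hb' Eb] := c_gsurj C Hb nS.
have [s1 s2 _] := c_arr C Hb'.
case: (EM (b' = e)) => [Eb'|nb']; first by rewrite /a0 -Eb' Eb.
exfalso; apply: (no_multi st_Tq Hb' He nb'); left.
by rewrite s1 s2 Eb E1 E2.
Qed.

Lemma st_cross' b : b < na p -> f (asrc p b) = y -> f (atgt p b) = x -> False.
Proof.
move=> Hb E1 E2; case: (EM (S b)) => [Sb|nS].
  by apply: st_nxy; rewrite -E1 -E2; apply/esym; apply: st_Sarr.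
have [b' Hb' Eb] := c_gsurj C Hb nS.
have [s1 s2 _] := c_arr C Hb'.
case: (EM (b' = e)) => [Eb'|nb'].
  by apply: st_nxy; rewrite /x -Eb' s1 Eb E1.
apply: (no_multi st_Tq Hb' He nb'); right.
by rewrite s1 s2 Eb E1 E2.
Qed.

Lemma st_nm z : z < nn q -> (node_map x y z = node_shift y x <-> z = x \/ z = y).
Proof.
move=> Hz; rewrite /node_map; case: (eqVneq z y) => [->|/eqP nzy]; first by split => // _; right.
split => [E|[->|E]] //; left; apply: (ns_inj nzy _ E); exact: st_nxy.
Qed.

Lemma st_F' u : F' u <-> u < nn p /\ (f u = x \/ f u = y).
Proof.
rewrite /F' /fib; split => -[Hu E]; split => //.
  by apply/(st_nm (c_f C Hu)).
by apply/(st_nm (c_f C Hu)).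
Qed.

Lemma st_F1F' u : F1 u -> F' u. Proof. by move=> [Hu E]; apply/st_F'; split => //; left. Qed.
Lemma st_F2F' u : F2 u -> F' u. Proof. by move=> [Hu E]; apply/st_F'; split => //; right. Qed.

Lemma st_Kyp : contrib_s p F2 yp K.
Proof.
have [T _ Hi _ dt] := Pp; have [Ha nS] := st_a0; have [fx fy aK] := st_fa0.
have [_ Ls] := single_mem (Hi a0 Ha); rewrite aK in Ls.
split => // -[b [[Hb [s1 s2]] E1 E2]].
have Sb : S b.
  apply: (st_inS Hb); by case: s1 => _ ->; case: s2 => _ ->.
apply: (dt b a0 Hb Ha) => //; first by move=> Eb; apply: nS; rewrite -Eb.
by rewrite E2 aK.
Qed.

Lemma st_Kxp : contrib_t p F1 xp K.
Proof.
have [T _ Hi ds _] := Pp; have [Ha nS] := st_a0; have [fx fy aK] := st_fa0.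
have [Lt _] := single_mem (Hi a0 Ha); rewrite aK in Lt.
split => // -[b [[Hb [s1 s2]] E1 E2]].
have Sb : S b.
  apply: (st_inS Hb); by case: s1 => _ ->; case: s2 => _ ->.
apply: (ds b a0 Hb Ha) => //; first by move=> Eb; apply: nS; rewrite -Eb.
by rewrite E2 aK.
Qed.

Lemma st_arrF' b : sub_arrow p F' b ->
  [/\ b < na p, f (asrc p b) = x \/ f (asrc p b) = y & f (atgt p b) = x \/ f (atgt p b) = y].
Proof. by move=> [Hb [/st_F' [_ E1] /st_F' [_ E2]]]. Qed.

Lemma st_a0F' : sub_arrow p F' a0.
Proof.
have [Ha _] := st_a0; have [fx fy _] := st_fa0; have [r1 r2] := st_xpyp.
by split => //; split; apply/st_F'; split => //; [left|right].
Qed.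

Lemma st_merge_s : subpath_src p F' = subpath_src p F1 `|` (subpath_src p F2 `\ K).
Proof.
have [fx fy aK] := st_fa0; have [r1 r2] := st_xpyp.
apply/seteqP; split => z /=.
- move=> [v [Fv Hz Hn]]; have Cv : contrib_s p F' v z by [].
  have [Hv [Ex|Ey]] := (st_F' v).1 Fv.
    left; hnf; exists v; split => //.
    by have [] := contrib_s_anti st_F1F' Cv.
  have C2 := contrib_s_anti st_F2F' Cv.
  right; split; first by hnf; exists v; split => //; case: C2.
  move=> /= zK; rewrite zK in Cv C2.
  case: (EM (v = yp)) => [Evy|nvy].
    by case: Cv => _; apply; exists a0; split => //; try exact: st_a0F'; rewrite ?Evy //.
  apply: (c_disj_s C Hv r2 nvy); first by rewrite Ey fy.
    by rewrite Ey; exact: C2.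
  by rewrite Ey; exact: st_Kyp.
- move=> [[v [[Hv Ev] Hz Hn]]|[[v [[Hv Ev] Hz Hn]] zK]].
    exists v; split => //; first exact: st_F1F'.
    move=> [b [Sb Eb Lb]]; have [Hb [s|s] t] := st_arrF' Sb.
      by apply: Hn; exists b; split => //; split => //; split; split => //;
        [case: (tree_ranges st_Tp Hb)|rewrite Eb|case: (tree_ranges st_Tp Hb) => _; rewrite Eb].
    by apply: (st_cross' Hb s); rewrite Eb.
  exists v; split => //; first exact: st_F2F'.
  move=> [b [Sb Eb Lb]]; have [Hb [s|s] t] := st_arrF' Sb.
    by apply: zK; rewrite /= -Lb (st_cross Hb s) ?Eb.
  by apply: Hn; exists b; split => //; split => //; split; split => //;
    [case: (tree_ranges st_Tp Hb)|rewrite Eb|case: (tree_ranges st_Tp Hb) => _; rewrite Eb].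
Qed.

Lemma st_merge_t : subpath_tgt p F' = (subpath_tgt p F1 `\ K) `|` subpath_tgt p F2.
Proof.
have [fx fy aK] := st_fa0; have [r1 r2] := st_xpyp.
apply/seteqP; split => z /=.
- move=> [v [Fv Hz Hn]]; have Cv : contrib_t p F' v z by [].
  have [Hv [Ex|Ey]] := (st_F' v).1 Fv; last first.
    right; hnf; exists v; split => //.
    by have [] := contrib_t_anti st_F2F' Cv.
  have C1 := contrib_t_anti st_F1F' Cv.
  left; split; first by hnf; exists v; split => //; case: C1.
  move=> /= zK; rewrite zK in Cv C1.
  case: (EM (v = xp)) => [Evx|nvx].
    by case: Cv => _; apply; exists a0; split => //; try exact: st_a0F'; rewrite ?Evx //.
  apply: (c_disj_t C Hv r1 nvx); first by rewrite Ex fx.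
    by rewrite Ex; exact: C1.
  by rewrite Ex; exact: st_Kxp.
- move=> [[[v [[Hv Ev] Hz Hn]] zK]|[v [[Hv Ev] Hz Hn]]].
    exists v; split => //; first exact: st_F1F'.
    move=> [b [Sb Eb Lb]]; have [Hb s [t|t]] := st_arrF' Sb.
      by apply: Hn; exists b; split => //; split => //; split; split => //;
        [case: (tree_ranges st_Tp Hb)|rewrite Eb|case: (tree_ranges st_Tp Hb) => _].
    by apply: zK; rewrite /= -Lb (st_cross Hb _ t) ?Eb.
  exists v; split => //; first exact: st_F2F'.
  move=> [b [Sb Eb Lb]]; have [Hb s [t|t]] := st_arrF' Sb.
    by apply: (st_cross' Hb _ t); rewrite Eb.
  by apply: Hn; exists b; split => //; split => //; split; split => //;
    [case: (tree_ranges st_Tp Hb)|rewrite Eb|case: (tree_ranges st_Tp Hb) => _].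
Qed.

Lemma st_core_s u v z : F1 u -> F2 v -> contrib_s p F' u z -> contrib_s p F' v z -> False.
Proof.
move=> [Hu Eu] [Hv Ev] Cu Cv.
have [fx fy aK] := st_fa0; have [r1 r2] := st_xpyp; have [Hx Hy] := st_xy.
have [_ d1 _ _] := gp_trans HH Pq He.
have C1 := contrib_s_anti st_F1F' Cu; have C2 := contrib_s_anti st_F2F' Cv.
have zx : esrc (nlab q x) z.
  rewrite (c_lab C Hx) /=; exists u; split; [by split|by case: C1|by case: C1].
have zy : esrc (nlab q y) z.
  rewrite (c_lab C Hy) /=; exists v; split; [by split|by case: C2|by case: C2].
case: (EM (z = K)) => [zK|nzK]; last first.
  by apply: (disj_mem d1 zx); split.
rewrite zK in Cv C2.
case: (EM (v = yp)) => [Evy|nvy].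
  by case: Cv => _; apply; exists a0; split => //; try exact: st_a0F'; rewrite ?Evy //.
apply: (c_disj_s C Hv r2 nvy); first by rewrite Ev fy.
  by rewrite Ev; exact: C2.
by rewrite Ev; exact: st_Kyp.
Qed.

Lemma st_core_t u v z : F1 u -> F2 v -> contrib_t p F' u z -> contrib_t p F' v z -> False.
Proof.
move=> [Hu Eu] [Hv Ev] Cu Cv.
have [fx fy aK] := st_fa0; have [r1 r2] := st_xpyp; have [Hx Hy] := st_xy.
have [_ _ d2 _] := gp_trans HH Pq He.
have C1 := contrib_t_anti st_F1F' Cu; have C2 := contrib_t_anti st_F2F' Cv.
have zx : etgt (nlab q x) z.
  rewrite (c_lab C Hx) /=; exists u; split; [by split|by case: C1|by case: C1].
have zy : etgt (nlab q y) z.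
  rewrite (c_lab C Hy) /=; exists v; split; [by split|by case: C2|by case: C2].
case: (EM (z = K)) => [zK|nzK]; last first.
  by apply: (disj_mem d2 _ zy); split.
rewrite zK in Cu C1.
case: (EM (u = xp)) => [Eux|nux].
  by case: Cu => _; apply; exists a0; split => //; try exact: st_a0F'; rewrite ?Eux //.
apply: (c_disj_t C Hu r1 nux); first by rewrite Eu fx.
  by rewrite Eu; exact: C1.
by rewrite Eu; exact: st_Kxp.
Qed.

Lemma st_contr : contr p (glue q e) (fun a => S a \/ a = a0)
  (fun v => node_map x y (f v)) (fun j => g (arr_unshift e j)).
Proof.
have [fx fy aK] := st_fa0; have [r1 r2] := st_xpyp; have [Hx Hy] := st_xy.
have [Ha0 nSa0] := st_a0; have nxy := st_nxy.
split.
- by move=> a [/(c_S C)|->].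
- by move=> v Hv /=; apply: nm_lt => //; apply: (c_f C).
- move=> w /= Hw; have Hu := nu_lt y Hw.
  have [v Hv Ev] := c_fsurj C Hu; exists v => //; by rewrite Ev nm_nu.
- move=> u v Hu Hv; split => [E|].
    have cS u' v' : clos_refl_trans nat (uadjE p S) u' v' ->
        clos_refl_trans nat (uadjE p (fun a => S a \/ a = a0)) u' v'.
      by apply: crt_mono => u1 v1 [a [Ha Sa o]]; exists a; split => //; left.
    have step : clos_refl_trans nat (uadjE p (fun a => S a \/ a = a0)) xp yp.
      by apply: rt_step; exists a0; split => //; [right|left].
    have fu := c_f C Hu; have fv := c_f C Hv.
    case: (EM (f u = f v)) => [Euv|nuv].
      by apply: cS; apply/(c_fib C Hu Hv).
    have [//|[[Ex|Ey] [Ex'|Ey']]] := nm_eq E nxy.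
    + by exfalso; apply: nuv; rewrite Ex Ex'.
    + apply: rt_trans; first by apply: cS; apply/(c_fib C Hu r1); rewrite Ex fx.
      apply: rt_trans step _; apply: cS; apply/(c_fib C r2 Hv); by rewrite Ey' fy.
    + apply: rt_trans; first by apply: cS; apply/(c_fib C Hu r2); rewrite Ey fy.
      apply: rt_trans; first exact: crt_uadjE_sym step.
      apply: cS; apply/(c_fib C r1 Hv); by rewrite Ex' fx.
    + by exfalso; apply: nuv; rewrite Ey Ey'.
  elim => [u1 v1 [a [Ha [Sa|Ea] o]]|u1|u1 v1 w1 _ IH1 _ IH2] //.
  + have := st_Sarr Ha Sa; by case: o => [[<- <-]|[<- <-]] ->.
  + rewrite Ea in o; have E1 := (st_nm (c_f C r1)).2 (or_introl fx).
    have E2 := (st_nm (c_f C r2)).2 (or_intror fy).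
    by case: o => [[<- <-]|[<- <-]]; rewrite E1 E2.
  + by rewrite IH1.
- move=> j /= Hj; have Hb := au_lt Hj He; have [G1 G2] := c_g C Hb.
  split => // -[//|E]; apply: (@au_neq e j); exact: (c_ginj C Hb He E).
- move=> i j /= Hi Hj E; apply: (@au_inj e); exact: (c_ginj C (au_lt Hi He) (au_lt Hj He) E).
- move=> a Ha nS; have [b Hb Eb] := c_gsurj C Ha (fun Sa => nS (or_introl Sa)).
  have nbe : b <> e by move=> Ebe; apply: nS; right; rewrite -Eb Ebe.
  exists (pi e b); first exact: pi_lt.
  by rewrite au_pi.
- move=> j /= Hj; have Hb := au_lt Hj He; have [s1 s2 s3] := c_arr C Hb.
  by rewrite s1 s2 s3.
- move=> w /= Hw; case: eqP => [Ew|nw].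
    have [Hx' Hy'] := tree_ranges st_Tq He.
    rewrite Ew /x /y glue_lab_eq; last exact: He. 2: exact: st_Tq.
    rewrite (c_lab C Hx') (c_lab C Hy') /=.
    have M1 := st_merge_s; have M2 := st_merge_t; rewrite /F' /F1 /F2 /x /y /K in M1 M2.
    by rewrite M1 M2.
  have Hu := nu_lt y Hw.
  rewrite (c_lab C Hu) (@fib_eq V p f (fun v => node_map x y (f v)) (node_unshift y w) w) //.
  move=> u Hu'; split => [->|E]; first exact: nm_nu.
  have fu := c_f C Hu'.
  case: (EM (f u = x \/ f u = y)) => [o|no].
    by exfalso; apply: nw; rewrite -E; apply/(st_nm fu).
  rewrite -E /node_map; case: eqP => [Ey|nfy]; first by exfalso; apply: no; right.
  by rewrite nu_ns.
- move=> u v z Hu Hv nuv /= E Cu Cv.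
  case: (EM (f u = f v)) => [Euv|nfuv].
    apply: (c_disj_s C Hu Hv nuv Euv).
      by apply: (contrib_s_anti _ Cu) => w [Hw Ew]; split => //; rewrite Ew.
    by apply: (contrib_s_anti _ Cv) => w [Hw Ew]; split => //; rewrite Ew.
  have [//|[ou ov]] := nm_eq E nxy.
  have EF : node_map x y (f u) = node_shift y x by apply/(st_nm (c_f C Hu)).
  rewrite EF in Cu Cv.
  case: ou => Eu; case: ov => Ev; try by (exfalso; apply: nfuv; rewrite Eu Ev).
    exact: (st_core_s (conj Hu Eu) (conj Hv Ev) Cu Cv).
  exact: (st_core_s (conj Hv Ev) (conj Hu Eu) Cv Cu).
- move=> u v z Hu Hv nuv /= E Cu Cv.
  case: (EM (f u = f v)) => [Euv|nfuv].
    apply: (c_disj_t C Hu Hv nuv Euv).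
      by apply: (contrib_t_anti _ Cu) => w [Hw Ew]; split => //; rewrite Ew.
    by apply: (contrib_t_anti _ Cv) => w [Hw Ew]; split => //; rewrite Ew.
  have [//|[ou ov]] := nm_eq E nxy.
  have EF : node_map x y (f u) = node_shift y x by apply/(st_nm (c_f C Hu)).
  rewrite EF in Cu Cv.
  case: ou => Eu; case: ov => Ev; try by (exfalso; apply: nfuv; rewrite Eu Ev).
    exact: (st_core_t (conj Hu Eu) (conj Hv Ev) Cu Cv).
  exact: (st_core_t (conj Hv Ev) (conj Hu Eu) Cv Cu).
Qed.
End Step.

End Sec_TF.

Section Sec_TG.
Local Open Scope classical_set_scope.

Lemma contr_S_equiv V (p q : rpath V) S S' f g :
  (forall a, S a <-> S' a) -> contr p q S f g -> contr p q S' f g.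
Proof.
move=> SE C; split; try by case: C.
- by move=> a /SE; apply: (c_S C).
- move=> u v Hu Hv; rewrite (c_fib C Hu Hv); split; apply: crt_mono => x y [a [Ha Sa o]];
    exists a; split => //; apply/SE => //.
- by move=> b Hb; have [G1 G2] := c_g C Hb; split => // /SE.
- by move=> a Ha nS; apply: (c_gsurj C Ha) => /SE.
Qed.

Lemma contr_base V (H : set (edge V)) (p : rpath V) : is_path H p ->
  exists g, contr p p (fun _ => False) id g /\ (forall a, a < na p -> g a = a).
Proof. by move=> P; have [g [C Hg]] := contr_iso P (iso_id p); exists g. Qed.

Lemma contr_tup V (H : set (edge V)) (p : rpath V) n : is_higraph H -> is_path H p ->
  forall ds (q : rpath V) S f g, size ds = n -> is_path H q -> contr p q S f g ->
  uniq ds -> all (fun a => a < na q) ds ->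
  exists f' g', contr p (glue_seq q (tup2gs ds)) (fun a => S a \/ a \in map g ds) f' g'.
Proof.
move=> HH Pp; elim: n => [|n IH] [|d ds] q S f g // Es Pq C.
  move=> _ _; exists f, g; apply: (contr_S_equiv _ C) => a; rewrite in_nil; split; by [left|case].
case: Es => Es /andP [nd u] /andP [Hd Ha].
have C1 := st_contr HH Pp Pq C Hd.
have [f' [g' C']] := IH (map (pi d) ds) _ _ _ _ (etrans (size_map _ _) Es) (glue_path HH Pq Hd) C1
  (uniq_map_pi nd u) (all_map_pi nd Hd Ha).
exists f', g'; rewrite tup2gs_cons glue_seq_cons.
apply: (contr_S_equiv _ C') => a.
have -> : map (fun j => g (arr_unshift d j)) (map (pi d) ds) = map g ds.
  rewrite -map_comp; apply/eq_in_map => b Hb /=; rewrite au_pi // => E; by move: nd; rewrite -E Hb.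
rewrite inE; split => [[[Sa|Ea]|Ia]|[Sa|/orP [/eqP Ea|Ia]]].
- by left.
- by right; rewrite Ea eqxx.
- by right; rewrite Ia orbT.
- by left; left.
- by left; right.
- by right.
Qed.

Lemma bij_card n m (h : nat -> nat) : (forall i, i < n -> h i < m) ->
  (forall i j, i < n -> j < n -> h i = h j -> i = j) ->
  (forall k, k < m -> exists2 i, i < n & h i = k) -> n = m.
Proof.
move=> h1 h2 h3; apply/eqP; rewrite eqn_leq; apply/andP; split.
  have U : uniq (map h (iota 0 n)).
    rewrite map_inj_in_uniq ?iota_uniq // => i j; rewrite !mem_iota !add0n /=; exact: h2.
  have := @uniq_leq_size _ _ (iota 0 m) U; rewrite size_map !size_iota; apply => k /mapP [i].
  by rewrite !mem_iota add0n => Hi ->; rewrite h1.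
have := @uniq_leq_size _ (iota 0 m) (map h (iota 0 n)) (iota_uniq _ _).
rewrite size_map !size_iota; apply => k; rewrite mem_iota add0n /= => Hk.
by have [i Hi <-] := h3 k Hk; apply: map_f; rewrite mem_iota add0n.
Qed.

Lemma iso_path V (H : set (edge V)) (p p' : rpath V) phi psi :
  is_path H p -> path_iso p p' phi psi -> is_path H p'.
Proof.
move=> [[n0 En Hr conn] Hl Hi ds dt] [[n1 n2 n3] [[a1 a2 a3] [l1 l2]]].
have Enn := bij_card n1 n2 n3; have Ena := bij_card a1 a2 a3.
split; [split|..].
- by rewrite -Enn.
- by rewrite -Enn -Ena.
- move=> b Hb; have [a Ha <-] := a3 b Hb; have [s1 s2 _] := l2 a Ha.
  by have [r1 r2] := Hr a Ha; rewrite s1 s2; split; apply: n1.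
- move=> w w' Hw Hw'; have [v Hv <-] := n3 w Hw; have [v' Hv' <-] := n3 w' Hw'.
  elim: (conn v v' Hv Hv') => [u1 v1 [a [Ha o]]|u1|u1 v1 z1 _ IH1 _ IH2].
  + apply: rt_step; exists (psi a); split; first exact: a1.
    have [s1 s2 _] := l2 a Ha; rewrite s1 s2.
    by case: o => [[-> ->]|[-> ->]]; [left|right].
  + exact: rt_refl.
  + exact: rt_trans IH1 IH2.
- by move=> w Hw; have [v Hv <-] := n3 w Hw; rewrite l1 //; apply: Hl.
- move=> b Hb; have [a Ha <-] := a3 b Hb; have [s1 s2 s3] := l2 a Ha.
  have [r1 r2] := Hr a Ha; by rewrite s1 s2 s3 !l1 //; apply: Hi.
- move=> b b' Hb Hb' nbb' E; have [a Ha Ea] := a3 b Hb; have [a' Ha' Ea'] := a3 b' Hb'.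
  rewrite -Ea -Ea' in nbb' E *; have [s1 _ s3] := l2 a Ha; have [s1' _ s3'] := l2 a' Ha'.
  have [r1 _] := Hr a Ha; have [r1' _] := Hr a' Ha'.
  rewrite s3 s3'; apply: ds => //; first by move=> Eaa; apply: nbb'; rewrite Eaa.
  by apply: n2 => //; rewrite -s1 -s1'.
- move=> b b' Hb Hb' nbb' E; have [a Ha Ea] := a3 b Hb; have [a' Ha' Ea'] := a3 b' Hb'.
  rewrite -Ea -Ea' in nbb' E *; have [_ s2 s3] := l2 a Ha; have [_ s2' s3'] := l2 a' Ha'.
  have [_ r2] := Hr a Ha; have [_ r2'] := Hr a' Ha'.
  rewrite s3 s3'; apply: dt => //; first by move=> Eaa; apply: nbb'; rewrite Eaa.
  by apply: n2 => //; rewrite -s2 -s2'.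
Qed.

Lemma L3 V (H : set (edge V)) (p : rpath V) : is_higraph H -> is_path H p ->
  forall es (q : rpath V) S f g, is_path H q -> contr p q S f g -> valid_gs q es ->
  exists ds, [/\ uniq ds, (forall d, d \in ds -> d < na p /\ ~ S d), size ds = size es &
    forall (q' : rpath V) S' f' g' dq, is_path H q' -> contr p q' S' f' g' ->
      (forall a, S a <-> S' a) -> uniq dq -> all (fun a => a < na q') dq -> map g' dq = ds ->
      gs_equiv q' (tup2gs dq) q es].
Proof.
move=> HH Pp; elim => [|e es IH] q S f g Pq C Hv.
  exists [::]; split => // q' S' f' g' [|//] _ _ _ _ _ _.
  by split => //.
case: Hv => He Hv.
have C1 := st_contr HH Pp Pq C He.
have [ds1 [u1 D1 Sz1 Eq1]] := IH _ _ _ _ (glue_path HH Pq He) C1 Hv.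
have [Ge nSe] := c_g C He.
exists (g e :: ds1); split.
- rewrite /= u1 andbT; apply/negP => /D1 [_]; apply; by right.
- move=> d; rewrite inE => /orP [/eqP ->|/D1 [Hd nS]] //; split => // Sd; apply: nS; by left.
- by rewrite /= Sz1.
move=> q' S' f' g' [|d0 dq1] //= Pq' C' SE /andP [nd0 u'] /andP [Hd0 Ha'] [Ed0 Edq].
rewrite tup2gs_cons.
have C1' := st_contr HH Pp Pq' C' Hd0.
have Eq := Eq1 _ _ _ _ (map (pi d0) dq1) (glue_path HH Pq' Hd0) C1'.
have E' := Eq (fun a => conj (fun H => match H with or_introl Sa => or_introl (proj1 (SE a) Sa)
                                             | or_intror Ea => or_intror (etrans Ea (esym Ed0)) end)
                       (fun H => match H with or_introl Sa => or_introl (proj2 (SE a) Sa)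
                                             | or_intror Ea => or_intror (etrans Ea Ed0) end))
  (uniq_map_pi nd0 u') (all_map_pi nd0 Hd0 Ha').
have {Eq E'} E' : gs_equiv (glue q' d0) (tup2gs (map (pi d0) dq1)) (glue q e) es.
  apply: E'; rewrite -map_comp -Edq; apply/eq_in_map => b Hb /=; rewrite au_pi //.
  by move=> Eb; move: nd0; rewrite -Eb Hb.
have Tp : is_tree p by case: Pp.
have [phi [psi [I Ipsi]]] := contr_uniq Tp C' C (fun a => iff_sym (SE a)).
case: E' => Es Ej; split; first by rewrite /= Es.
move=> [|j] /= Hj.
  exists phi, psi; split => //; apply: (c_ginj C) => //.
    by have [_ [[a1 _ _] _]] := I; apply: a1.
  by rewrite Ipsi.
exact: Ej.
Qed.

End Sec_TG.

Unset Implicit Arguments.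

Theorem proposition4p17 (V : Type) (H : set (edge V)) (p : rpath V) (k : nat) :
  is_higraph H -> is_path H p -> 1 <= k ->
  [/\ (* the map lands in k-step gluing sequences on p *)
      (forall ds, break_tuple p k ds ->
         valid_gs p (tup2gs ds) /\ size (tup2gs ds) = k),
      (* injective (modulo the identification of gluing sequences) *)
      (forall ds ds', break_tuple p k ds -> break_tuple p k ds' ->
         gs_equiv p (tup2gs ds) p (tup2gs ds') -> ds = ds'),
      (* surjective onto gluing sequences on (any representative of) p *)
      (forall p' es, isomorphic p p' -> valid_gs p' es -> size es = k ->
         exists2 ds, break_tuple p k ds & gs_equiv p (tup2gs ds) p' es) &
      (* permuted tuples give the same final path *)
      (forall ds ds', break_tuple p k ds -> perm_eq ds ds' ->
         isomorphic (glue_seq p (tup2gs ds)) (glue_seq p (tup2gs ds')))].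
Proof.
move=> HH Pp _; split.
- move=> ds [Sz u Ha]; split; [exact: valid_tup|by rewrite size_tup2gs].
- move=> ds ds' [Sz u Ha] [Sz' u' Ha'] Eq.
  exact: (tup2gs_inj u u' (gs_equiv_inj HH Pp (valid_tup u Ha) Eq)).
- move=> p' es [phi [psi I]] Hv Sz.
  have Pp' := iso_path Pp I.
  have [g0 [C0 _]] := contr_iso Pp I.
  have [ds [u D Sz1 Eq]] := L3 HH Pp Pp' C0 Hv.
  have [g1 [C1 Hg1]] := contr_base Pp.
  have Ha : all (fun a => a < na p) ds by apply/allP => d /D [].
  exists ds; first by split => //; rewrite Sz1.
  apply: (Eq p _ _ _ ds Pp C1) => //.
  rewrite -[RHS]map_id; apply/eq_in_map => d /D [Hd _]; exact: Hg1.
- move=> ds ds' [Sz u Ha] Pm.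
  have u' : uniq ds' by rewrite -(perm_uniq Pm).
  have Ha' : all (fun a => a < na p) ds' by rewrite -(perm_all _ Pm).
  have [g1 [C1 Hg1]] := contr_base Pp.
  have [f2 [g2 C2]] := contr_tup HH Pp (erefl (size ds)) Pp C1 u Ha.
  have [f3 [g3 C3]] := contr_tup HH Pp (erefl (size ds')) Pp C1 u' Ha'.
  have Tp : is_tree p by case: Pp.
  have SE : forall a, (False \/ a \in map g1 ds) <-> (False \/ a \in map g1 ds').
    by move=> a; rewrite (perm_mem (perm_map g1 Pm)).
  have [phi [psi [I _]]] := contr_uniq Tp C2 C3 SE.
  by exists phi, psi.
Qed.
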